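(* Let $p$ be a prime with $p\equiv 3\pmod 4$. Then for every pattern $w\in\{r,n\}^3$ of length $3$, the number of occurrences of $w$ in $\mathbb{Z}_p$ is either $\lfloor\frac{p-3}{8}\rfloor$ or $\lceil\frac{p-3}{8}\rceil$.
   Context: An element $x\in\mathbb{Z}_p\setminus\{0\}$ is a quadratic residue (denoted $r$) if $x\equiv y^2\pmod p$ for some integer $y$, and a nonresidue (denoted $n$) otherwise. For a word $w=w_0w_1\cdots w_{k-1}\in\{r,n\}^k$ (a pattern of length $k$), an occurrence of $w$ in $\mathbb{Z}_p$ is an element $a\in\mathbb{Z}_p$ such that the $k$ consecutive elements $a,a+1,\dots,a+(k-1)$ (computed in $\mathbb{Z}_p$) are all nonzero and, for each $0\le i\le k-1$, $a+i$ is a quadratic residue if $w_i=r$ and a nonresidue if $w_i=n$. The number of occurrences of $w$ is the number of such $a$. *)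

(* Defs.v *)
From mathcomp Require Import all_boot.
Set Implicit Arguments. Unset Strict Implicit. Unset Printing Implicit Defensive.

(* Elements of Z_p are represented by naturals, reduced mod p. *)
Definition qr (p x : nat) : bool :=
  (x %% p != 0) && [exists y : 'I_p, (y * y) %% p == x %% p].

(* A pattern is a word over {r, n}, encoded as seq bool (true = r, false = n). *)
Definition is_occurrence (p : nat) (w : seq bool) (a : nat) : bool :=
  all (fun i => ((a + i) %% p != 0) && (qr p (a + i) == nth false w i))
      (iota 0 (size w)).

Definition num_occ (p : nat) (w : seq bool) : nat :=
  #|[pred a : 'I_p | is_occurrence p w a]|.

(* Main.v *)
Require Import Defs.
From mathcomp Require Import all_boot.
From mathcomp Require Import all_boot all_order all_algebra all_field.
From mathcomp Require Import zify ring lra.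
Set Implicit Arguments. Unset Strict Implicit. Unset Printing Implicit Defensive.
Import Order.TTheory GRing.Theory Num.Theory.
Local Open Scope ring_scope.

Definition sq (F : finFieldType) (x : F) : bool := [exists y, y * y == x].
Definition chi (F : finFieldType) (x : F) : int :=
  if x == 0 then 0 else if sq x then 1 else -1.

Lemma nroots (F : finFieldType) (h2 : (2%:R : F) != 0) (x : F) :
  (#|[pred y : F | y * y == x]|%:R : int) = 1 + chi x.
Proof.
rewrite /chi; have [->|x0] := eqVneq x 0.
  rewrite (@eq_card _ _ (pred1 0)) ?card1 // => y.
  by rewrite !inE mulf_eq0 orbb.
case: ifP => [/existsP [y0 /eqP hy] | nsq]; last first.
  rewrite (eq_card0 (A := [pred y : F | y * y == x])) //.
  by move=> y; rewrite !inE; apply: contraFF nsq => hy; apply/existsP; exists y.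
have y00 : y0 != 0 by apply: contraNneq x0 => e; rewrite -hy e mul0r.
rewrite (@eq_card _ _ [set y0; - y0]); last first.
  move=> y; rewrite !inE -hy -subr_eq0.
  have -> : y * y - y0 * y0 = (y - y0) * (y + y0) by ring.
  by rewrite mulf_eq0 subr_eq0 addr_eq0.
rewrite cards2.
have -> : (y0 == - y0) = false.
  apply/negbTE; apply: contra h2 => /eqP e.
  have : y0 * 2%:R == 0 by rewrite mulr_natr mulr2n {1}e addNr.
  by rewrite mulf_eq0 (negbTE y00).
by [].
Qed.

Lemma sum_ind (G : finType) (c : G) (g : G -> int) :
  \sum_x ((c == x)%:R * g x) = g c.
Proof.
rewrite (bigD1 c) //= eqxx mul1r big1 ?addr0 // => x.
by rewrite eq_sym => /negbTE ->; rewrite mul0r.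
Qed.

Lemma sum_ind1 (G : finType) (c : G) :
  \sum_x ((c == x)%:R : int) = 1.
Proof.
rewrite (bigD1 c) //= eqxx big1 ?addr0 // => x.
by rewrite eq_sym => /negbTE ->.
Qed.

Lemma card_sum (G : finType) (P : pred G) : (#|P|%:R : int) = \sum_x (P x)%:R.
Proof.
rewrite -sum1_card natr_sum big_mkcond /=; apply: eq_bigr => y _.
by rewrite /in_mem /=; case: (P y).
Qed.

Definition Nr (F : finFieldType) (x : F) : int := \sum_y (y * y == x)%:R.

Lemma NrE (F : finFieldType) (h2 : (2%:R : F) != 0) (x : F) : Nr x = 1 + chi x.
Proof. by rewrite -nroots // card_sum. Qed.

Lemma sum_Nr (F : finFieldType) : \sum_(x : F) Nr x = (#|F|%:R : int).
Proof.
rewrite /Nr exchange_big /= -sum1_card natr_sum; apply: eq_bigr => y _.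
by rewrite sum_ind1.
Qed.

Lemma sum_chi (F : finFieldType) (h2 : (2%:R : F) != 0) : \sum_(x : F) chi x = 0.
Proof.
have := sum_Nr F; under eq_bigr => x _ do rewrite NrE //.
rewrite big_split /= sumr_const => e.
by apply: (addrI (#|F|%:R)); rewrite addr0; exact: e.
Qed.

Lemma sum_shift (F : finFieldType) (f : F -> int) (c : F) :
  \sum_x f (x + c) = \sum_x f x.
Proof.
by rewrite [RHS](reindex_inj (addIr c)).
Qed.

Lemma sum_pairs (F : finFieldType) (h2 : (2%:R : F) != 0) (k : F) (k0 : k != 0) :
  \sum_(x : F) Nr x * Nr (x + k) = (#|F|%:R : int) - 1.
Proof.
transitivity (\sum_y \sum_z ((z * z == y * y + k)%:R : int)).
  rewrite /Nr; under eq_bigr => x _ do rewrite mulr_suml.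
  rewrite exchange_big /=; apply: eq_bigr => y _.
  under eq_bigr => x _ do rewrite mulr_sumr.
  rewrite exchange_big /=; apply: eq_bigr => z _.
  rewrite -(sum_ind (y * y) (fun x => (z * z == x + k)%:R)).
  by apply: eq_bigr => x _; rewrite mulrC.
rewrite pair_bigA /=.
pose h (q : F * F) := ((q.2 - q.1) / 2%:R, (q.2 + q.1) / 2%:R).
pose g (q : F * F) := (q.2 - q.1, q.2 + q.1).
have hg : cancel g h.
  by move=> [y z]; rewrite /g /h /=; congr pair; field.
have gh : cancel h g.
  by move=> [u v]; rewrite /g /h /=; congr pair; field.
rewrite (reindex h) /=; last by exists g => q _.
transitivity (\sum_(q : F * F) ((q.1 * q.2 == k)%:R : int)).
  apply: eq_bigr => -[u v] _ /=; congr (_%:R).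
  rewrite (_ : (v + u) / 2%:R * ((v + u) / 2%:R) = (v - u) / 2%:R * ((v - u) / 2%:R) + u * v); last by field.
  by rewrite (inj_eq (addrI _)).
rewrite -(pair_bigA _ (fun u v => ((u * v == k)%:R : int))) /=.
transitivity (\sum_(u : F) ((u != 0)%:R : int)).
  apply: eq_bigr => u _.
  have [->|u0] := eqVneq u 0.
    by rewrite big1 // => v _; rewrite mul0r eq_sym (negbTE k0).
  transitivity (\sum_v ((k / u == v)%:R : int)); last by rewrite sum_ind1.
  apply: eq_bigr => v _.
  have -> : (u * v == k) = (k / u == v); last by [].
  by apply/eqP/eqP => e; [rewrite -e mulrC mulKf | rewrite -e mulrC divfK].
have e1 : (#|F|%:R : int) = \sum_(u : F) 1 by rewrite -sum1_card natr_sum.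
rewrite e1 [X in _ - X](_ : 1 = \sum_u (((0 : F) == u)%:R : int)); last by rewrite sum_ind1.
rewrite -sumrN -big_split /=. apply: eq_bigr => u _.
by case: eqP => [<-|]; rewrite ?eqxx // => /eqP; rewrite eq_sym => /negbTE ->; rewrite subr0.
Qed.

Lemma neg1_nsq (F : finFieldType) (h2 : (2%:R : F) != 0) (hF : (#|F| %% 4 = 3)%N) :
  ~~ sq (-1 : F).
Proof.
apply/existsP => -[y /eqP hy].
have y0 : y != 0 by apply: contra_eq_neq hy => ->; rewrite mul0r eq_sym oppr_eq0 oner_eq0.
have hc : #|F| = (4 * (#|F| %/ 4) + 3)%N by rewrite {1}(divn_eq #|F| 4) hF mulnC.
have y2 : y ^+ 2 = -1 by rewrite expr2.
have := expf_card y; rewrite hc exprD exprM.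
have -> : y ^+ 4 = 1 by rewrite (_ : 4 = 2 * 2)%N // exprM y2 sqrrN expr1n.
rewrite expr1n mul1r (_ : 3 = 2 + 1)%N // exprD y2 expr1 mulN1r => e.
have : y * 2%:R == 0 by rewrite mulr_natr mulr2n -{1}e addNr.
by rewrite mulf_eq0 (negbTE y0) (negbTE h2).
Qed.

Lemma chi_vals (F : finFieldType) (x : F) : x != 0 -> chi x = 1 \/ chi x = -1.
Proof. by rewrite /chi => /negbTE ->; case: (sq x); [left|right]. Qed.

Lemma chiN (F : finFieldType) (h2 : (2%:R : F) != 0) (hF : (#|F| %% 4 = 3)%N) (x : F) :
  chi (- x) = - chi x.
Proof.
pose d (x : F) := - (chi x + chi (- x)).
have d0 : forall x, 0 <= d x.
  move=> z; rewrite /d /chi oppr_eq0; case: eqP => //= /eqP z0.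
  case hz: (sq z); case hnz: (sq (-z)) => //.
  exfalso; case/existsP: hz => y /eqP hy; case/existsP: hnz => t /eqP ht.
  have y0 : y != 0 by apply: contra_neq z0 => e; rewrite -hy e mul0r.
  have : sq (-1 : F).
    apply/existsP; exists (t / y); apply/eqP.
    by rewrite mulrACA -invfM ht hy mulNr divff.
  by rewrite (negbTE (neg1_nsq h2 hF)).
have sd : \sum_x d x = 0.
  have sN : \sum_(z : F) chi (- z) = \sum_(z : F) chi z by rewrite [RHS](reindex_inj (@oppr_inj F)).
  by rewrite /d sumrN big_split /= sN sum_chi // addr0 oppr0.
have := (@psumr_eq0P _ _ _ _ (fun i _ => d0 i) sd x isT); rewrite /d => /eqP.
by move/eqP => e; lia.
Qed.

Lemma sum_pair_chi (F : finFieldType) (h2 : (2%:R : F) != 0) (k : F) (k0 : k != 0) :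
  \sum_(x : F) chi x * chi (x + k) = -1.
Proof.
have := sum_pairs h2 k0.
rewrite (eq_bigr (fun x => (1 + chi x + chi (x + k)) + chi x * chi (x + k))); last first.
  by move=> x _; rewrite !NrE //; ring.
rewrite big_split /= big_split /= big_split /= (sum_shift (@chi F)) sum_chi // sumr_const.
move=> e; apply: (addrI (#|F|%:R)); rewrite -[RHS]e.
by rewrite !addr0.
Qed.

Lemma sum_triple_chi (F : finFieldType) (h2 : (2%:R : F) != 0) (hF : (#|F| %% 4 = 3)%N) :
  \sum_(x : F) chi x * chi (x + 1) * chi (x + 2%:R) = 0.
Proof.
set T := \sum_(x : F) _.
have hinj : injective (fun x : F => - x - 2%:R).
  by move=> a b /addIr /oppr_inj.
have : T = - T.
  rewrite {1}/T (reindex_inj hinj) /= /T -sumrN; apply: eq_bigr => x _.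
  rewrite (_ : - x - 2%:R + 1 = - (x + 1)); last by ring.
  rewrite (_ : - x - 2%:R + 2%:R = - x); last by ring.
  rewrite (_ : - x - 2%:R = - (x + 2%:R)); last by ring.
  rewrite !chiN //; ring.
move=> e; lia.
Qed.

Definition eb (b : bool) : int := if b then 1 else -1.

Lemma fac (F : finFieldType) (y : F) (b : bool) : y != 0 ->
  1 + eb b * chi y = 2 * (sq y == b)%:R.
Proof. by rewrite /chi => /negbTE ->; case: (sq y); case: b. Qed.

Definition occF (F : finFieldType) (b0 b1 b2 : bool) (x : F) : bool :=
  [&& x != 0, sq x == b0, x + 1 != 0, sq (x + 1) == b1, x + 2%:R != 0 & sq (x + 2%:R) == b2].

Definition tw (F : finFieldType) (b0 b1 b2 : bool) (x : F) : int :=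
  (1 + eb b0 * chi x) * (1 + eb b1 * chi (x + 1)) * (1 + eb b2 * chi (x + 2%:R)).

Lemma chi0 (F : finFieldType) : chi (0 : F) = 0.
Proof. by rewrite /chi eqxx. Qed.

Lemma nb0 : (false%:R : int) = 0. Proof. by []. Qed.
Lemma nb1 : (true%:R : int) = 1. Proof. by []. Qed.

Lemma point (F : finFieldType) (h2 : (2%:R : F) != 0) b0 b1 b2 (x : F) :
  (8 * (occF b0 b1 b2 x)%:R : int) = tw b0 b1 b2 x - (x == 0)%:R * tw b0 b1 b2 (0 : F)
     - (x == -1)%:R * tw b0 b1 b2 (-1 : F) - (x == - 2%:R)%:R * tw b0 b1 b2 (- 2%:R : F).
Proof.
have n1 : (-1 : F) != 0 by rewrite oppr_eq0 oner_eq0.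
have n2 : (- 2%:R : F) != 0 by rewrite oppr_eq0.
have n12 : (-1 : F) != - 2%:R.
  apply/negP => /eqP /oppr_inj e.
  have : (2%:R : F) - 1 == 0 by rewrite -e subrr.
  by rewrite (_ : 2%:R - 1 = 1 :> F) ?oner_eq0 //; ring.
have [->|x0] := eqVneq x 0.
  rewrite (eq_sym 0 (-1)) (negbTE n1) (eq_sym 0 (- 2%:R)) (negbTE n2) /occF eqxx /=; ring.
have [->|x1] := eqVneq x (-1).
  rewrite (negbTE n12) /occF addNr eqxx /= !andbF; rewrite (_ : false%:R = 0 :> int) //; ring.
have [->|x2] := eqVneq x (- 2%:R).
  rewrite /occF.
  rewrite (_ : - 2%:R + 2%:R = 0 :> F) ?eqxx /= ?andbF; last by ring.
  rewrite (_ : false%:R = 0 :> int) //; ring.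
have y1 : x + 1 != 0 by rewrite addr_eq0.
have y2 : x + 2%:R != 0 by rewrite addr_eq0.
rewrite /tw /occF x0 y1 y2 (fac b0 x0) (fac b1 y1) (fac b2 y2) /=.
rewrite !nb0.
case: (sq x == b0); case: (sq (x + 1) == b1); case: (sq (x + 2%:R) == b2); rewrite /= ?nb0 ?nb1; ring.
Qed.

Lemma sum_indK (G : finType) (c : G) (K : int) : \sum_x ((x == c)%:R * K) = K.
Proof.
rewrite (bigD1 c) //= eqxx mul1r big1 ?addr0 // => x /negbTE ->; by rewrite mul0r.
Qed.

Lemma count8 (F : finFieldType) (h2 : (2%:R : F) != 0) b0 b1 b2 :
  (8 * #|[pred x : F | occF b0 b1 b2 x]|%:R : int) =
  \sum_(x : F) tw b0 b1 b2 x - tw b0 b1 b2 (0 : F) - tw b0 b1 b2 (-1 : F) - tw b0 b1 b2 (- 2%:R : F).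
Proof.
rewrite card_sum mulr_sumr.
under eq_bigr => x _ do rewrite point //.
by rewrite !sumrB !sum_indK.
Qed.

Lemma sum_tw (F : finFieldType) (h2 : (2%:R : F) != 0) (hF : (#|F| %% 4 = 3)%N) b0 b1 b2 :
  \sum_(x : F) tw b0 b1 b2 x = #|F|%:R - eb b0 * eb b1 - eb b0 * eb b2 - eb b1 * eb b2.
Proof.
set e0 := eb b0; set e1 := eb b1; set e2 := eb b2.
rewrite (eq_bigr (fun x => 1 + e0 * chi x + e1 * chi (x + 1) + e2 * chi (x + 2%:R)
   + e0 * e1 * (chi x * chi (x + 1)) + e0 * e2 * (chi x * chi (x + 2%:R))
   + e1 * e2 * (chi (x + 1) * chi (x + 2%:R)) + e0 * e1 * e2 * (chi x * chi (x + 1) * chi (x + 2%:R)))); last first.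
  by move=> x _; rewrite /tw; ring.
rewrite !big_split /= -!mulr_sumr.
rewrite (sum_shift (@chi F)) (sum_shift (@chi F)) sum_chi // sum_triple_chi //.
rewrite (sum_pair_chi h2 (oner_neq0 F)) (sum_pair_chi h2 h2).
have -> : \sum_(x : F) chi (x + 1) * chi (x + 2%:R) = -1.
  rewrite -(sum_pair_chi h2 (oner_neq0 F)) -(sum_shift (fun y => chi y * chi (y + 1)) 1).
  by apply: eq_bigr => x _; rewrite -addrA.
rewrite sumr_const; ring.
Qed.

Lemma chi1 (F : finFieldType) : chi (1 : F) = 1.
Proof.
rewrite /chi oner_eq0 (_ : sq (1 : F) = true) //.
by apply/existsP; exists 1; rewrite mulr1.
Qed.

Lemma mainF (F : finFieldType) (h2 : (2%:R : F) != 0) (hF : (#|F| %% 4 = 3)%N) b0 b1 b2 :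
  #|[pred x : F | occF b0 b1 b2 x]| = ((#|F| - 3) %/ 8)%N \/
  #|[pred x : F | occF b0 b1 b2 x]| = ((#|F| - 3 + 7) %/ 8)%N.
Proof.
have := count8 h2 b0 b1 b2; rewrite sum_tw // /tw.
rewrite add0r chi0 !addNr chi0 (_ : -2%:R + 1 = -1 :> F); last by ring.
rewrite (_ : -1 + 2%:R = 1 :> F); last by ring.
rewrite add0r !(chiN h2 hF) chi1.
have [->|->] := chi_vals h2.
  case: b0; case: b1; case: b2 => /=; lia.
case: b0; case: b1; case: b2 => /=; lia.
Qed.

Lemma Fp_eq_nat (p : nat) (pp : prime p) (a b : nat) :
  ((a%:R : 'F_p) == b%:R) = (a %% p == b %% p)%N.
Proof. by rewrite -(inj_eq val_inj) /= !val_Fp_nat. Qed.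

Lemma Fp_nz (p : nat) (pp : prime p) (a : nat) :
  ((a%:R : 'F_p) != 0) = (a %% p != 0)%N.
Proof. by rewrite -(mulr0n (1 : 'F_p)) Fp_eq_nat // mod0n. Qed.

Lemma Fp_sq (p : nat) (pp : prime p) (a : nat) :
  sq (a%:R : 'F_p) = [exists y : 'I_p, (y * y) %% p == a %% p]%N.
Proof.
apply/existsP/existsP => -[y hy].
  have yl : (val y < p)%N.
    have -> : val y = (val y %% p)%N.
      have := val_Fp_nat pp (val y); rewrite (natr_Zp y). done.
    by rewrite ltn_pmod // prime_gt0.
  exists (Ordinal yl) => /=.
  rewrite -Fp_eq_nat // natrM.
  by rewrite (natr_Zp y).
exists ((val y)%:R); rewrite -natrM Fp_eq_nat //.
Qed.

Lemma card_iota (n : nat) (P : pred nat) :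
  #|[pred a : 'I_n | P (val a)]| = count P (iota 0 n).
Proof.
rewrite cardE /enum_mem size_filter -val_enum_ord count_map -enumT.
by apply: eq_count.
Qed.

Lemma bridge (p : nat) (pp : prime p) (b0 b1 b2 : bool) (n : nat) :
  occF b0 b1 b2 (n%:R : 'F_p) = is_occurrence p [:: b0; b1; b2] n.
Proof.
rewrite /occF /is_occurrence /= /qr addn0.
rewrite (_ : n%:R + 1 = (n + 1)%:R :> 'F_p); last by rewrite natrD.
rewrite (_ : n%:R + 2%:R = (n + 2)%:R :> 'F_p); last by rewrite natrD.
rewrite !Fp_nz // !Fp_sq //.
by case: (n %% p == 0)%N; case: ((n + 1) %% p == 0)%N; case: ((n + 2) %% p == 0)%N; rewrite /= ?andbT ?andbF.
Qed.

Local Close Scope ring_scope.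
Theorem corollary2p5 (p : nat) (w : seq bool) :
  prime p -> p %% 4 = 3 -> size w = 3 ->
  num_occ p w = (p - 3) %/ 8 \/ num_occ p w = (p - 3 + 7) %/ 8.
Proof.
move=> pp hp; case: w => [|b0 [|b1 [|b2 []]]] // _.
set P := is_occurrence p [:: b0; b1; b2].
have e1 : num_occ p [:: b0; b1; b2] = count P (iota 0 p).
  by rewrite -card_iota.
have e2 : #|[pred x : 'F_p | occF b0 b1 b2 x]| = count P (iota 0 p).
  transitivity (count P (iota 0 (Zp_trunc (pdiv p)).+2)); last by rewrite Fp_cast.
  rewrite -card_iota; apply: eq_card => x; rewrite !inE -{1}(natr_Zp x).
  exact: bridge.
have h2 : ((2%:R : 'F_p) != 0)%R.
  rewrite Fp_nz // modn_small //.
  by have p3 : (2 < p)%N by lia.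
have hF : (#|'F_p| %% 4 = 3)%N by rewrite card_Fp.
have := mainF h2 hF b0 b1 b2; rewrite card_Fp //.
by rewrite e1 -e2.
Qed.
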